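(* Let $(x_n)_{n \in \mathbb{N}}$ be a sequence in $[0,1)$ with the following property: there exist $s \in \mathbb{N}$ and a positive real number $\gamma$ such that for infinitely many $N$ the point set $x_1, \ldots, x_N$ has a subset $x_{j_1}, \ldots, x_{j_M}$ with $M \geq \gamma N$ elements which has at most $s$ different distances between neighbouring elements. Then $(x_n)_{n \in \mathbb{N}}$ does not have Poissonian pair correlations.
   Context: For real $x$, $\|x\|$ denotes the distance from $x$ to the nearest integer. A sequence $(x_n)_{n\in\mathbb{N}}$ in $[0,1)$ has Poissonian pair correlations if for every $s \geq 0$, $$F_N(s) := \frac{1}{N}\#\left\{1 \leq l \neq m \leq N : \|x_l - x_m\| \leq \frac{s}{N}\right\} \to 2s \quad (N\to\infty).$$ For a finite point set in $[0,1)$, the distances between neighbouring elements (gaps) are the distances between consecutive points when the set is arranged in increasing order. *)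

(* Defs.v *)
From HB Require Import structures.
From mathcomp Require Import all_boot all_order all_algebra.
From mathcomp Require Import all_classical all_reals all_analysis.
Set Implicit Arguments. Unset Strict Implicit. Unset Printing Implicit Defensive.
Import Order.TTheory GRing.Theory Num.Theory.
Import numFieldNormedType.Exports.
Local Open Scope classical_set_scope.
Local Open Scope ring_scope.

Section Defs.
Variable R : realType.

Definition dnear (x : R) : R :=
  Num.min (x - (Num.floor x)%:~R) ((Num.floor x + 1)%:~R - x).

(* F_N(s) for the sequence x_1, x_2, ... given as x (n) for n >= 1;
   indices l, m in 1..N are represented by i.+1 with i : 'I_N *)
Definition pcF (x : nat -> R) (N : nat) (s : R) : R :=
  (N%:R)^-1 *
  (#|[set lm : 'I_N * 'I_N | (lm.1 != lm.2) &&
        (dnear (x (lm.1).+1 - x (lm.2).+1) <= s / N%:R)]|)%:R.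

Definition poissonian_pc (x : nat -> R) : Prop :=
  forall s : R, 0 <= s -> (fun N => pcF x N s) @ \oo --> 2 * s.

Definition gaps (l : seq R) : seq R :=
  let t := sort <=%R l in pairmap (fun a b => b - a) (head 0 t) (behead t).

Definition subpoints (x : nat -> R) (N : nat) (J : {set 'I_N}) : seq R :=
  [seq x (val j).+1 | j <- enum J].
End Defs.

(* Main.v *)
Require Import Defs.
From HB Require Import structures.
From mathcomp Require Import all_boot all_order all_algebra.
From mathcomp Require Import all_classical all_reals all_analysis.
From mathcomp Require Import ring lra.
Import Order.TTheory GRing.Theory Num.Theory.
Import numFieldNormedType.Exports.
Local Open Scope ring_scope.

Section Aux.
Variable R : realType.

Lemma sum_pairmap (x0 : R) (s : seq R) :
  \sum_(v <- pairmap (fun a b => b - a) x0 s) v = last x0 s - x0.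
Proof.
elim: s x0 => [|y s IH] x0 /=; first by rewrite big_nil subrr.
by rewrite big_cons IH addrC addrA subrK.
Qed.

Lemma path_pairmap_ge0 (x0 : R) (s : seq R) :
  path <=%R x0 s -> all (fun v => 0 <= v) (pairmap (fun a b => b - a) x0 s).
Proof.
elim: s x0 => [|y s IH] x0 //= /andP[h1 h2].
by rewrite subr_ge0 h1 IH.
Qed.

Lemma count_long (g : seq R) (c : R) :
  all (fun v => 0 <= v) g -> 0 < c ->
  (count (fun v => c < v) g)%:R * c <= \sum_(v <- g) v.
Proof.
move=> + c0; elim: g => [|y g IH] /=; first by rewrite big_nil mul0r.
move=> /andP[y0 /IH h]; rewrite big_cons natrD mulrDl.
apply: lerD => //.
by have [cy|_] := ltrP c y; rewrite /= ?mul1r ?mul0r //; exact: ltW.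
Qed.

Lemma iterop_add1 n : iterop n addn 1%N 0%N = n.
Proof. by case: n => // n; rewrite iteropS iter_addn mul1n addn1. Qed.

Lemma pigeon (g : seq R) (P : pred R) (B : R) : 0 <= B ->
  (forall v, v \in g -> P v -> (count_mem v g)%:R <= B) ->
  (count P g)%:R <= (size (undup g))%:R * B.
Proof.
move=> B0 H.
have E : count P g = (\sum_(v <- undup g | P v) count_mem v g)%N.
  rewrite -sum1_count -(big_undup_iterop_count _ g P (fun _ => 1%N)).
  by apply: eq_bigr => v _; rewrite iterop_add1.
rewrite E natr_sum -sum1_size natr_sum mulr_suml.
rewrite [X in _ <= X](bigID P) /=.
rewrite -[X in X <= _]addr0; apply: lerD; last first.
  by apply: sumr_ge0 => v _; rewrite mul1r.
rewrite big_seq_cond [X in _ <= X]big_seq_cond.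
apply: ler_sum => v /andP[vg Pv]; rewrite mul1r; apply: H => //.
by rewrite -mem_undup.
Qed.

Lemma pairmap_pairs (T : eqType) (x : T) (r : seq T) :
  uniq (x :: r) ->
  [/\ uniq (pairmap (fun a b => (b, a)) x r),
      all (fun p => p.1 != p.2) (pairmap (fun a b => (b, a)) x r) &
      all (fun p => p.2 \in x :: r) (pairmap (fun a b => (b, a)) x r)].
Proof.
elim: r x => [|y r IH] x //.
move=> U; have /andP[] : (x \notin y :: r) && uniq (y :: r) by exact: U.
rewrite inE negb_or => /andP[xy xr] u.
have [u1 a1 a2] := IH y u.
rewrite /=.
rewrite u1 a1 eq_sym xy inE eqxx /= andbT; split => //.
  apply/negP => /(allP a2) /=; rewrite inE => /orP[/eqP yx|xr'].
    by move: xy; rewrite yx eqxx.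
  by rewrite xr' in xr.
apply/allP => p /(allP a2); rewrite !inE => ->; by rewrite orbT.
Qed.

Lemma pairmap_mapf (T : Type) (f : T -> R) (x : T) (r : seq T) :
  pairmap (fun a b => b - a) (f x) (map f r) =
  map (fun p => f p.1 - f p.2) (pairmap (fun a b => (b, a)) x r).
Proof. by elim: r x => [|y r IH] x //=; rewrite IH. Qed.

Lemma comb (N : nat) (f : 'I_N -> R) (J : {set 'I_N}) :
  (forall i, 0 <= f i < 1) ->
  exists P : seq ('I_N * 'I_N),
    [/\ uniq P /\ all (fun p => p.1 != p.2) P,
        gaps (map f (enum J)) = map (fun p => f p.1 - f p.2) P,
        all (fun v => 0 <= v) (gaps (map f (enum J))),
        \sum_(v <- gaps (map f (enum J))) v <= 1 &
        (#|J| <= (size (gaps (map f (enum J)))).+1)%N].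
Proof.
move=> f01; rewrite /gaps sort_map.
set sJ := sort _ (enum J).
have So : sorted <=%R (map f sJ).
  by rewrite /sJ -sort_map; apply: sort_sorted; exact: le_total.
have U : uniq sJ by rewrite sort_uniq enum_uniq.
have Sz : size sJ = #|J| by rewrite size_sort cardE.
move: So U Sz; case: sJ => [|a r] So U Sz /=.
  exists [::]; rewrite big_nil -Sz; split => //.
have [u1 a1 _] := @pairmap_pairs _ a r U.
exists (pairmap (fun a b => (b, a)) a r).
rewrite pairmap_mapf; split => //.
- by rewrite -pairmap_mapf; exact: path_pairmap_ge0.
- rewrite -pairmap_mapf sum_pairmap last_map.
  have /andP[_ h1] := f01 (last a r); have /andP[h0 _] := f01 a.
  by rewrite lerBlDr; apply: ler_wpDr => //; exact: ltW.
- by rewrite size_map size_pairmap -Sz.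
Qed.
End Aux.
Section Aux2.
Variable R : realType.

Lemma dnear_small (d : R) : 0 <= d <= 1/2 -> dnear d = d.
Proof.
move=> /andP[d0 d2].
have F : Num.floor d = 0.
  apply/eqP; rewrite real_floor_eq ?num_real //= d0 /= add0r.
  by apply: (le_lt_trans d2); rewrite ltr_pdivrMr // mul1r ltr1n.
rewrite /dnear F subr0 add0r.
apply/min_idPl; rewrite lerBrDl -mulr2n -mulr_natr.
by rewrite -ler_pdivlMr // mul1r.
Qed.

Definition Sset (x : nat -> R) (N : nat) (t : R) : {set 'I_N * 'I_N} :=
  [set lm : 'I_N * 'I_N | (lm.1 != lm.2) &&
        (dnear (x (lm.1).+1 - x (lm.2).+1) <= t / N%:R)].

Definition Eset (x : nat -> R) (N : nat) (v : R) : {set 'I_N * 'I_N} :=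
  [set lm : 'I_N * 'I_N | (lm.1 != lm.2) &&
        (dnear (x (lm.1).+1 - x (lm.2).+1) == v)].

Lemma pcF_S (x : nat -> R) N (t : R) : (0 < N)%N -> (#|Sset x N t|)%:R = N%:R * pcF x N t.
Proof.
move=> N0; rewrite /pcF mulrA mulfV ?mul1r; last by rewrite pnatr_eq0 -lt0n.
congr (_%:R); apply: eq_card => p.
rewrite inE /=.
by apply/idP/idP => h; [rewrite in_setE | move: h; rewrite in_setE].
Qed.

Lemma count_E (x : nat -> R) N (P : seq ('I_N * 'I_N)) (v : R) :
  uniq P -> all (fun p => p.1 != p.2) P -> 0 <= v <= 1/2 ->
  (count (fun p : 'I_N * 'I_N => (x (val p.1).+1 - x (val p.2).+1 == v)%R) P <= #|Eset x N v|)%N.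
Proof.
move=> U A v01.
rewrite -size_filter cardE; apply: uniq_leq_size; first by rewrite filter_uniq.
move=> p; rewrite mem_filter => /andP[/eqP e pP].
rewrite mem_enum inE (allP A _ pP) /= -e dnear_small //; by rewrite e.
Qed.

Lemma E_le_S (x : nat -> R) N (v b : R) : (v <= b / N%:R) -> (#|Eset x N v| <= #|Sset x N b|)%N.
Proof.
move=> vb; apply: subset_leq_card; apply/fintype.subsetP => p.
by rewrite !inE => /andP[-> /eqP ->].
Qed.

Lemma E_le_SD (x : nat -> R) N (v a b : R) : (a / N%:R < v) -> (v <= b / N%:R) -> (a <= b) ->
  (#|Eset x N v|%:R <= (#|Sset x N b|)%:R - (#|Sset x N a|)%:R :> R).
Proof.
move=> av vb ab.
have sub : Sset x N a \subset Sset x N b.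
  apply/fintype.subsetP => p; rewrite !inE => /andP[-> h] /=; apply: (le_trans h).
  by apply: ler_wpM2r => //; rewrite invr_ge0.
rewrite -natrB ?subset_leq_card // ler_nat.
have -> : (#|Sset x N b| - #|Sset x N a| = #|Sset x N b :\: Sset x N a|)%N.
  by rewrite cardsD (finset.setIidPr sub).
apply: subset_leq_card; apply/fintype.subsetP => p.
rewrite !inE => /andP[-> /eqP ->] /=; rewrite vb andbT -ltNge.
exact: av.
Qed.

Lemma Ebound (x : nat -> R) (N L : nat) (d e v : R) :
  (0 < N)%N -> 0 < d -> 0 <= v -> v * N%:R < L%:R * d ->
  (forall j, (j <= L)%N -> `|2 * (j%:R * d) - pcF x N (j%:R * d)| < e) ->
  (#|Eset x N v|)%:R <= N%:R * (4 * d + 2 * e).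
Proof.
move=> N0 d0 v0 vL Hj.
have Np : 0 < N%:R :> R by rewrite ltr0n.
have u0 : 0 <= v * N%:R / d by rewrite divr_ge0 // ?mulr_ge0 // ltW.
have /andP[hk1 hk2] := truncn_itv u0.
set k := Num.trunc _ in hk1 hk2.
rewrite ler_pdivlMr // in hk1; rewrite ltr_pdivrMr // in hk2.
have kL : (k < L)%N.
  by rewrite -(ltr_nat R); rewrite -(ltr_pM2r d0); apply: le_lt_trans vL.
have HS : forall j, (j <= L)%N ->
  (#|Sset x N (j%:R * d)|)%:R <= N%:R * (2 * (j%:R * d) + e) /\ N%:R * (2 * (j%:R * d) - e) <= (#|Sset x N (j%:R * d)|)%:R.
  move=> j jL; have := Hj j jL; rewrite ltr_distlC => /andP[h1 h2].
  rewrite pcF_S //; split; apply: ler_wpM2l; rewrite ?ler0n //; exact: ltW.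
move: hk1 hk2; case: k kL => [|k'] kL hk1 hk2.
  have [h _] := HS 1%N kL.
  have hE : (#|Eset x N v|)%:R <= (#|Sset x N (1%:R * d)|)%:R :> R.
    rewrite ler_nat; apply: E_le_S.
    by rewrite ler_pdivlMr // mul1r; apply: ltW; rewrite mul1r in hk2.
  apply: (le_trans hE); apply: (le_trans h); apply: ler_wpM2l; rewrite ?ler0n //.
  have e0 : 0 <= e by exact: ltW (le_lt_trans (normr_ge0 _) (Hj 0%N (leq0n _))).
  rewrite mul1r; lra.
have [_ h1] := HS k' (ltnW (ltnW kL)).
have [h2 _] := HS k'.+2 kL.
apply: le_trans (@E_le_SD x N v (k'%:R * d) (k'.+2%:R * d) _ _ _) _.
- rewrite ltr_pdivrMr //; apply: lt_le_trans hk1.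
  by rewrite ltr_pM2r // ltr_nat.
- rewrite ler_pdivlMr //; apply: ltW; apply: (lt_le_trans hk2).
  by rewrite ler_pM2r // -natr1 ler_nat.
- by apply: ler_wpM2r; [exact: ltW | rewrite ler_nat; apply/leqW/leqnSn].
- apply: (le_trans (lerB h2 h1)).
  rewrite -mulrBr; apply: ler_wpM2l; rewrite ?ler0n //.
  rewrite -!natr1 -!addrA; lra.
Qed.
End Aux2.

Theorem proposition1 (R : realType) (x : nat -> R) :
  (forall n : nat, (1 <= n)%N -> 0 <= x n < 1) ->
  (exists (s : nat) (gamma : R), 0 < gamma /\
     forall N0 : nat, exists N : nat, (N0 <= N)%N /\
       exists J : {set 'I_N},
         gamma * N%:R <= (#|J|)%:R /\
         (size (undup (gaps (subpoints x J))) <= s)%N) ->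
  ~ poissonian_pc x.
Proof.
move=> x01 [s [gam [g0 H]]] Pois.
set K := 2 / gam.
have K0 : 0 < K by rewrite divr_gt0.
set d := gam / (32 * (s.+1)%:R).
have d0 : 0 < d by rewrite divr_gt0 // mulr_gt0 // ltr0n.
have sd : s.+1%:R * d = gam / 32.
  by rewrite /d; field; rewrite addrC natr1 pnatr_eq0.
set L := (Num.trunc (K / d)).+2.
have KL : K < L%:R * d.
  have /andP[_ h] := truncn_itv (ltW (divr_gt0 K0 d0)).
  rewrite ltr_pdivrMr // in h; apply: (lt_le_trans h).
  by apply: ler_wpM2r; [exact: ltW | rewrite ler_nat /L].
have Hnear : \forall N \near \oo%classic,
    forall j : 'I_L.+1, `|2 * (j%:R * d) - pcF x N (j%:R * d)| < d.
  apply: filter_forall => j.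
  have := Pois (j%:R * d) (mulr_ge0 (ler0n _ _) (ltW d0)).
  by move/cvgrPdist_lt => /(_ d d0).
case: Hnear => N1 _ HN1.
have [N [hN [J [hJ hsz]]]] := H (maxn N1 (Num.trunc (4 / gam)).+1).
have hN1 : (N1 <= N)%N by apply: leq_trans hN; exact: leq_maxl.
have hN2 : 4 / gam < N%:R.
  have /andP[_ h] := truncn_itv (ltW (divr_gt0 (ltr0n R 4) g0)).
  apply: (lt_le_trans h); rewrite ler_nat; apply: leq_trans hN; exact: leq_maxr.
have Np : 0 < N%:R :> R by apply: lt_trans hN2; rewrite divr_gt0.
have N0 : (0 < N)%N by rewrite -(ltr0n R).
have gN : 4 < gam * N%:R by rewrite mulrC -ltr_pdivrMr.
have Hj : forall j, (j <= L)%N ->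
    `|2 * (j%:R * d) - pcF x N (j%:R * d)| < d.
  by move=> j jL; exact: (HN1 N hN1 (Ordinal (jL : (j < L.+1)%N))).
pose f := fun j : 'I_N => x (val j).+1.
have f01 : forall i, 0 <= f i < 1 by move=> i; apply: x01.
have [P [[U A] gE gge0 gsum gsz]] := @comb R N f J f01.
have e : subpoints x J = map f (enum J) by [].
rewrite e in hsz.
move: gE gge0 gsum gsz hsz; set g := gaps (map f (enum J)) => gE gge0 gsum gsz hsz.
have KN : 0 < K / N%:R by rewrite divr_gt0.
have Hlong := @count_long R g _ gge0 KN.
have Hshort : forall v, v \in g -> v <= K / N%:R ->
    (count_mem v g)%:R <= N%:R * (4 * d + 2 * d).
  move=> v vg vs.
  have v0 : 0 <= v by exact: (allP gge0).
  have v12 : v <= 1/2.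
    apply: (le_trans vs); rewrite ler_pdivrMr //.
    have : 4 / gam = 2 * K by rewrite /K; field; rewrite gt_eqF.
    lra.
  have hc : (count_mem v g <= #|Eset R x N v|)%N.
    by rewrite gE count_map; apply: count_E => //; rewrite v0 v12.
  have hE : (#|Eset R x N v|)%:R <= N%:R * (4 * d + 2 * d).
    apply: Ebound => //.
    apply: le_lt_trans KL; rewrite -ler_pdivlMr //.
    exact: Hj.
  by apply: le_trans hE; rewrite ler_nat.
pose sh := fun v : R => v <= K / N%:R.
have B0 : 0 <= N%:R * (4 * d + 2 * d) :> R.
  by apply: mulr_ge0; [exact: ltW | lra].
have Hpig := @pigeon R g sh _ B0 Hshort.
have Hcs : (count sh g)%:R <= N%:R * gam * (6 / 32).
  apply: (le_trans Hpig).
  apply: (@le_trans _ _ (s.+1%:R * (N%:R * (4 * d + 2 * d)))).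
    by apply: ler_wpM2r => //; rewrite ler_nat; apply: (leq_trans hsz).
  have -> : s.+1%:R * (N%:R * (4 * d + 2 * d)) = N%:R * 6 * (s.+1%:R * d) by ring.
  rewrite sd; rewrite le_eqVlt; apply/orP; left; apply/eqP; ring.
have Hcl0 : count [eta > (K / N%:R)] g = count (predC sh) g.
  by apply: eq_count => v; rewrite /= /sh -ltNge.
have Hcl : (count (predC sh) g)%:R <= N%:R * gam / 2.
  have -> : N%:R * gam / 2 = 1 / (K / N%:R).
    by rewrite /K; field; rewrite pnatr_eq0 -lt0n N0 /= gt_eqF.
  by rewrite ler_pdivlMr // -Hcl0; apply: le_trans Hlong gsum.
have Hsz := count_predC sh g.
have HJ : (#|J|)%:R <= (count sh g)%:R + (count (predC sh) g)%:R + 1 :> R.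
  by rewrite -natrD Hsz natr1 ler_nat.
lra.
Qed.
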